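(* Let $\nu = e^{-f}$ on $\mathbb{R}^n$ be $(L,M)$-smooth and let $0 \le t \le \min\{\frac{1}{8L},\frac{1}{M}\}$. For $x\in\mathbb{R}^n$ define $G = G(x) = (I + t\nabla^2 f(x))^{-2}$ and \[ \tilde\mu(x) = -t\,\nabla^2 f(x)\,G\,\nabla f(x) - t\sqrt{G}\,\mathrm{Tr}(\nabla^3 f(x)\,G) - \nabla\cdot G. \] Then for all $x\in\mathbb{R}^n$, \[ \tfrac34 I \preceq G(x) \preceq \tfrac43 I \qquad\text{and}\qquad \|\tilde\mu(x)\| \le \tfrac43 tL\|\nabla f(x)\| + 6\,t\,n^{3/2} M. \]
   Context: $\nu=e^{-f}$ is $(L,M)$-smooth if $f$ is three times differentiable, $\|\nabla^2 f(x)\|_{\mathrm{op}} \le L$ for all $x$, and $\|\nabla^2 f(x) - \nabla^2 f(y)\|_{\mathrm{op}} \le M\|x-y\|$ for all $x,y$. $\sqrt{G}$ is the positive definite square root. $\mathrm{Tr}(\nabla^3 f(x)\,G)\in\mathbb{R}^n$ is the vector whose $i$-th component is $\mathrm{Tr}(\nabla_i\nabla^2 f(x)\,G)$, where $\nabla_i\nabla^2 f(x)$ is the matrix with $(j,k)$ entry $\frac{\partial^3 f(x)}{\partial x_i\partial x_j\partial x_k}$. For a matrix-valued function $G(x)$ (here with $t$ fixed), $\nabla\cdot G(x)\in\mathbb{R}^n$ is the vector whose $i$-th component is $\sum_{j=1}^n \frac{\partial G_{ij}(x)}{\partial x_j}$. *)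

(* Defs.v *)
From Stdlib Require Import Reals.
From mathcomp Require Import ssreflect ssrfun ssrbool eqtype ssrnat seq fintype bigop.
Set Implicit Arguments.
Unset Strict Implicit.
Unset Printing Implicit Defensive.
Open Scope R_scope.

Definition vec (n : nat) := 'I_n -> R.
Definition mat (n : nat) := 'I_n -> 'I_n -> R.

Definition rsum (n : nat) (F : 'I_n -> R) : R := \big[Rplus/0]_(i < n) F i.

Definition vadd n (u v : vec n) : vec n := fun i => u i + v i.
Definition vsub n (u v : vec n) : vec n := fun i => u i - v i.
Definition vscale n (c : R) (v : vec n) : vec n := fun i => c * v i.
Definition vopp n (v : vec n) : vec n := fun i => - v i.
Definition dot n (u v : vec n) : R := rsum (fun i => u i * v i).
Definition vnorm n (v : vec n) : R := sqrt (dot v v).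
Definition basis {n} (k : 'I_n) : vec n := fun i => if i == k then 1 else 0.

Definition idm (n : nat) : mat n := fun i j => if i == j then 1 else 0.
Arguments idm : clear implicits.
Definition madd n (A B : mat n) : mat n := fun i j => A i j + B i j.
Definition msub n (A B : mat n) : mat n := fun i j => A i j - B i j.
Definition mscale n (c : R) (A : mat n) : mat n := fun i j => c * A i j.
Definition mm n (A B : mat n) : mat n := fun i k => rsum (fun j => A i j * B j k).
Definition mv n (A : mat n) (v : vec n) : vec n := fun i => rsum (fun j => A i j * v j).
Definition mtrace n (A : mat n) : R := rsum (fun i => A i i).
(* Frobenius norm (used only for the o(|h|) remainder of derivatives) *)
Definition mnorm n (A : mat n) : R := sqrt (rsum (fun i => rsum (fun j => A i j * A i j))).
Definition quad n (A : mat n) (v : vec n) : R := dot v (mv A v).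

Definition opnorm_le n (A : mat n) (c : R) : Prop :=
  forall v : vec n, vnorm (mv A v) <= c * vnorm v.

Definition is_inverse n (A B : mat n) : Prop := mm A B = idm n /\ mm B A = idm n.

Definition is_pd_sqrt n (S G : mat n) : Prop :=
  mm S S = G /\ (forall i j, S i j = S j i) /\
  (forall v : vec n, (exists i, v i <> 0) -> 0 < quad S v).

Definition has_grad n (f : vec n -> R) (g : vec n -> vec n) : Prop :=
  forall x eps, 0 < eps -> exists delta, 0 < delta /\
    forall h, vnorm h < delta ->
      Rabs (f (vadd x h) - f x - dot (g x) h) <= eps * vnorm h.

(* Frechet differentiability of a vector field: H x i j = d g_i / d x_j *)
Definition has_jac n (g : vec n -> vec n) (H : vec n -> mat n) : Prop :=
  forall x eps, 0 < eps -> exists delta, 0 < delta /\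
    forall h, vnorm h < delta ->
      vnorm (vsub (vsub (g (vadd x h)) (g x)) (mv (H x) h)) <= eps * vnorm h.

(* Frechet differentiability of a matrix field: T x i j k = d H_jk / d x_i *)
Definition has_mderiv n (H : vec n -> mat n) (T : vec n -> 'I_n -> mat n) : Prop :=
  forall x eps, 0 < eps -> exists delta, 0 < delta /\
    forall h, vnorm h < delta ->
      mnorm (fun j k => H (vadd x h) j k - H x j k - rsum (fun i => h i * T x i j k))
        <= eps * vnorm h.

(* nu = e^{-f} is (L,M)-smooth, with g = grad f, H = Hess f, T = nabla^3 f *)
Definition LM_smooth n (f : vec n -> R) (g : vec n -> vec n) (H : vec n -> mat n)
  (T : vec n -> 'I_n -> mat n) (L M : R) : Prop :=
  has_grad f g /\ has_jac g H /\ has_mderiv H T /\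
  (forall x, opnorm_le (H x) L) /\
  (forall x y, opnorm_le (msub (H x) (H y)) (M * vnorm (vsub x y))).

Definition has_partial n (F : vec n -> R) (x : vec n) (k : 'I_n) (l : R) : Prop :=
  derivable_pt_lim (fun s => F (vadd x (vscale s (basis k)))) 0 l.

(* Tr(nabla^3 f(x) G): i-th component Tr(nabla_i nabla^2 f(x) G) *)
Definition tr3 n (Tx : 'I_n -> mat n) (Gx : mat n) : vec n :=
  fun i => mtrace (mm (Tx i) Gx).

(* divergence of a matrix field, given its partial derivatives DGx i j k = d G_ij / d x_k *)
Definition mdiv n (DGx : 'I_n -> 'I_n -> 'I_n -> R) : vec n :=
  fun i => rsum (fun j => DGx i j j).

Definition mu_tilde n (t : R) (gx : vec n) (Hx : mat n) (Tx : 'I_n -> mat n)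
  (Gx Sx : mat n) (DGx : 'I_n -> 'I_n -> 'I_n -> R) : vec n :=
  vsub (vsub (vscale (- t) (mv (mm Hx Gx) gx)) (vscale t (mv Sx (tr3 Tx Gx)))) (mdiv DGx).

(* Main.v *)
Require Import Defs.
From Stdlib Require Import Reals Lra FunctionalExtensionality.
From mathcomp Require Import ssreflect ssrfun ssrbool eqtype ssrnat seq fintype bigop.
From HB Require Import structures.
Open Scope R_scope.
Set Implicit Arguments.
HB.instance Definition _ := Monoid.isComLaw.Build R 0 Rplus (fun a b c => esym (Rplus_assoc a b c)) Rplus_comm Rplus_0_l.

Lemma rsum_ext n (F G : 'I_n -> R) : (forall i, F i = G i) -> rsum F = rsum G.
Proof. by move=> h; rewrite /rsum; apply: eq_bigr => i _; apply h. Qed.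

Lemma rsum_add n (F G : 'I_n -> R) : rsum (fun i => F i + G i) = rsum F + rsum G.
Proof. by rewrite /rsum big_split. Qed.

Lemma rsum_scal n c (F : 'I_n -> R) : rsum (fun i => c * F i) = c * rsum F.
Proof.
rewrite /rsum; apply: esym; apply: (big_morph (fun y => c * y)).
- by move=> a b; ring.
- by ring.
Qed.

Lemma rsum_sub n (F G : 'I_n -> R) : rsum (fun i => F i - G i) = rsum F - rsum G.
Proof.
rewrite (@rsum_ext _ _ (fun i => F i + (-1) * G i)); last by move=> i; ring.
rewrite rsum_add rsum_scal; ring.
Qed.

Lemma rsum_le n (F G : 'I_n -> R) : (forall i, F i <= G i) -> rsum F <= rsum G.
Proof.
move=> h; rewrite /rsum; apply: (big_ind2 (fun a b => a <= b)).
- lra.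
- move=> *; lra.
- by move=> i _; apply h.
Qed.

Lemma rsum_abs n (F : 'I_n -> R) : Rabs (rsum F) <= rsum (fun i => Rabs (F i)).
Proof.
rewrite /rsum; apply: (big_ind2 (fun a b => Rabs a <= b)).
- rewrite Rabs_R0; lra.
- move=> a b c d h1 h2; apply: Rle_trans (Rabs_triang a c) _; lra.
- by move=> i _; apply Rle_refl.
Qed.

Lemma rsum_const n c : rsum (fun _ : 'I_n => c) = INR n * c.
Proof.
rewrite /rsum big_const_ord. elim: n => [|n IH] /=; first by ring.
rewrite IH; case: n IH => [|n] _ /=; ring.
Qed.

Lemma rsum_bound n (F : 'I_n -> R) c : (forall i, Rabs (F i) <= c) -> Rabs (rsum F) <= INR n * c.
Proof.
move=> h; eapply Rle_trans; [apply rsum_abs|]; rewrite -rsum_const; exact: rsum_le.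
Qed.

Lemma rsum_ge0 n (F : 'I_n -> R) : (forall i, 0 <= F i) -> 0 <= rsum F.
Proof. move=> h; rewrite -(Rmult_0_r (INR n)) -rsum_const; exact: rsum_le. Qed.

Lemma rsum_swap n (F : 'I_n -> 'I_n -> R) :
  rsum (fun i => rsum (fun j => F i j)) = rsum (fun j => rsum (fun i => F i j)).
Proof. rewrite /rsum; exact: exchange_big. Qed.

Lemma rsum_delta n (k : 'I_n) (F : 'I_n -> R) :
  rsum (fun i => if i == k then F i else 0) = F k.
Proof.
rewrite /rsum (bigD1 k) //= eqxx big1; first by rewrite Rplus_0_r.
by move=> i /negbTE ->.
Qed.

Lemma rsum_term n (F : 'I_n -> R) k : (forall i, 0 <= F i) -> F k <= rsum F.
Proof.
move=> h; rewrite /rsum (bigD1 k) //=.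
rewrite -{1}(Rplus_0_r (F k)); apply Rplus_le_compat_l.
apply: (big_ind (fun a => 0 <= a)); [lra | move=> *; lra | move=> i _; apply h].
Qed.

Lemma dot_comm n (u v : vec n) : dot u v = dot v u.
Proof. by apply: rsum_ext => i; ring. Qed.

Lemma dot_ge0 n (v : vec n) : 0 <= dot v v.
Proof. apply: rsum_ge0 => i; nra. Qed.

Lemma dot_ext n (u u' v v' : vec n) : (forall i, u i = u' i) -> (forall i, v i = v' i) -> dot u v = dot u' v'.
Proof. by move=> h1 h2; apply: rsum_ext => i; rewrite h1 h2. Qed.

Lemma CS n (u v : vec n) : dot u v * dot u v <= dot u u * dot v v.
Proof.
have [hv|hv] : dot v v = 0 \/ 0 < dot v v by have := dot_ge0 v; lra.
- have v0 : forall i, v i = 0.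
    move=> i; have := rsum_term (fun i => v i * v i) i (fun i => ltac:(nra)).
    rewrite -/(dot v v) hv => hh; nra.
  have -> : dot u v = 0.
    rewrite /dot (@rsum_ext _ _ (fun _ => 0)); last by move=> i; rewrite v0; ring.
    rewrite rsum_const; ring.
  rewrite hv; lra.
- set a := dot u v; set l := a / dot v v.
  have h : 0 <= rsum (fun i => (u i - l * v i) * (u i - l * v i)).
    apply: rsum_ge0 => i; exact: Rle_0_sqr.
  rewrite (@rsum_ext _ _ (fun i => u i * u i + ((-2 * l) * (u i * v i) + (l * l) * (v i * v i)))) in h;
    last by move=> i; ring.
  rewrite !rsum_add !rsum_scal -/(dot u u) -/(dot u v) -/(dot v v) -/a in h.
  have e : l * l * dot v v = l * a by rewrite /l; field; lra.
  rewrite e in h.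
  have : 0 <= dot u u - l * a by lra.
  rewrite /l => h2.
  have : 0 <= (dot u u - a / dot v v * a) * dot v v by apply: Rmult_le_pos; lra.
  have -> : (dot u u - a / dot v v * a) * dot v v = dot u u * dot v v - a * a by field; lra.
  lra.
Qed.

Lemma vnorm_ge0 n (v : vec n) : 0 <= vnorm v.
Proof. exact: sqrt_pos. Qed.

Lemma vnorm_sq n (v : vec n) : vnorm v * vnorm v = dot v v.
Proof. rewrite /vnorm sqrt_sqrt //; exact: dot_ge0. Qed.

Lemma dot_abs n (u v : vec n) : Rabs (dot u v) <= vnorm u * vnorm v.
Proof.
rewrite -(Rabs_pos_eq (vnorm u * vnorm v)); last by apply: Rmult_le_pos; apply: vnorm_ge0.
apply: Rsqr_le_abs_0; rewrite /Rsqr; have := CS u v; have := vnorm_sq u; have := vnorm_sq v; nra.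
Qed.

Lemma vnorm_le n (v : vec n) c : 0 <= c -> dot v v <= c * c -> vnorm v <= c.
Proof.
move=> hc h; rewrite /vnorm -(sqrt_square c) //; exact: sqrt_le_1_alt.
Qed.

Lemma vnorm_ext n (u v : vec n) : (forall i, u i = v i) -> vnorm u = vnorm v.
Proof. by move=> h; rewrite /vnorm (@dot_ext _ u v u v h h). Qed.

Lemma vnorm_add n (u v : vec n) : vnorm (fun i => u i + v i) <= vnorm u + vnorm v.
Proof.
apply: vnorm_le; first by have := vnorm_ge0 u; have := vnorm_ge0 v; lra.
rewrite /dot (@rsum_ext _ _ (fun i => u i * u i + (2 * (u i * v i) + v i * v i))); last by move=> i; ring.
rewrite !rsum_add rsum_scal -/(dot u u) -/(dot u v) -/(dot v v) -vnorm_sq -(vnorm_sq v).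
have := dot_abs u v; have := Rle_abs (dot u v); nra.
Qed.

Lemma vnorm_scale n c (v : vec n) : vnorm (fun i => c * v i) = Rabs c * vnorm v.
Proof.
rewrite /vnorm /dot (@rsum_ext _ _ (fun i => (c * c) * (v i * v i))); last by move=> i; ring.
rewrite rsum_scal sqrt_mult; [|nra|exact: dot_ge0].
by rewrite -sqrt_Rsqr_abs.
Qed.

Lemma vnorm_sub n (u v : vec n) : vnorm (fun i => u i - v i) <= vnorm u + vnorm v.
Proof.
rewrite (@vnorm_ext _ _ (fun i => u i + (-1) * v i)); last by move=> i; ring.
apply: Rle_trans (vnorm_add _ _) _; rewrite vnorm_scale Rabs_Ropp Rabs_R1; lra.
Qed.

Lemma comp_le n (v : vec n) i : Rabs (v i) <= vnorm v.
Proof.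
rewrite -(sqrt_Rsqr_abs (v i)) /vnorm; apply: sqrt_le_1_alt.
exact: (rsum_term (fun i => v i * v i) i (fun i => Rle_0_sqr (v i))).
Qed.

Lemma vnorm_comp_bound n (v : vec n) c : 0 <= c -> (forall i, Rabs (v i) <= c) ->
  vnorm v <= sqrt (INR n) * c.
Proof.
move=> hc h; apply: vnorm_le; first by apply: Rmult_le_pos => //; exact: sqrt_pos.
have -> : sqrt (INR n) * c * (sqrt (INR n) * c) = INR n * (c * c).
  have := sqrt_sqrt (INR n) (pos_INR n); nra.
rewrite -rsum_const; apply: rsum_le => i.
have e : v i * v i = Rabs (v i) * Rabs (v i) := Rsqr_abs (v i).
rewrite e; have := h i; have := Rabs_pos (v i); nra.
Qed.

Lemma mv_basis n (A : mat n) k i : mv A (basis k) i = A i k.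
Proof.
rewrite /mv (@rsum_ext _ _ (fun j => if j == k then A i j else 0)) ?rsum_delta //.
by move=> j; rewrite /basis; case: (j == k); ring.
Qed.

Lemma vnorm_basis n (k : 'I_n) : vnorm (basis k) = 1.
Proof.
rewrite /vnorm /dot (@rsum_ext _ _ (fun j => if j == k then 1 else 0)) ?rsum_delta ?sqrt_1 //.
by move=> j; rewrite /basis; case: (j == k); ring.
Qed.

Lemma mv_mm n (A B : mat n) v : mv (mm A B) v = mv A (mv B v).
Proof.
apply: functional_extensionality => i; rewrite /mv /mm.
rewrite (@rsum_ext _ _ (fun j => rsum (fun l => A i l * B l j * v j)));
  last by move=> j; rewrite Rmult_comm -rsum_scal; apply: rsum_ext => l; ring.
rewrite rsum_swap; apply: rsum_ext => l; rewrite -rsum_scal; apply: rsum_ext => j; ring.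
Qed.

Lemma mm_assoc n (A B C : mat n) : mm (mm A B) C = mm A (mm B C).
Proof.
apply: functional_extensionality => i; apply: functional_extensionality => k.
have := f_equal (fun w => w i) (mv_mm A B (fun j => C j k)); rewrite /= /mv /mm => e.
by rewrite /mm; apply: (etrans _ (etrans e _)); apply: rsum_ext.
Qed.

Lemma mv_idm n (v : vec n) : mv (idm n) v = v.
Proof.
apply: functional_extensionality => i; rewrite /mv.
rewrite (@rsum_ext _ _ (fun j => if j == i then v j else 0)) ?rsum_delta //.
by move=> j; rewrite /idm eq_sym; case: (j == i); ring.
Qed.

Lemma mm_idm_l n (A : mat n) : mm (idm n) A = A.
Proof.
apply: functional_extensionality => i; apply: functional_extensionality => k.
exact: (f_equal (fun w => w i) (mv_idm (fun j => A j k))).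
Qed.

Lemma mm_idm_r n (A : mat n) : mm A (idm n) = A.
Proof.
apply: functional_extensionality => i; apply: functional_extensionality => k.
rewrite /mm (@rsum_ext _ _ (fun j => if j == k then A i j else 0)) ?rsum_delta //.
by move=> j; rewrite /idm; case: (j == k); ring.
Qed.

Lemma dot_sym_mv n (S : mat n) u v : (forall i j, S i j = S j i) ->
  dot u (mv S v) = dot (mv S u) v.
Proof.
move=> hS; rewrite /dot /mv.
rewrite (@rsum_ext _ _ (fun i => rsum (fun j => u i * S i j * v j)));
  last by move=> i; rewrite -rsum_scal; apply: rsum_ext => j; ring.
rewrite rsum_swap; apply: rsum_ext => j.
rewrite Rmult_comm -rsum_scal; apply: rsum_ext => i; rewrite hS; ring.
Qed.

Lemma mv_frob n (A : mat n) v : vnorm (mv A v) <= mnorm A * vnorm v.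
Proof.
apply: vnorm_le; first by apply: Rmult_le_pos; [exact: sqrt_pos|exact: vnorm_ge0].
have -> : mnorm A * vnorm v * (mnorm A * vnorm v) = (mnorm A * mnorm A) * (vnorm v * vnorm v) by ring.
rewrite vnorm_sq /mnorm sqrt_sqrt; last by apply: rsum_ge0 => i; apply: rsum_ge0 => j; exact: Rle_0_sqr.
rewrite Rmult_comm -rsum_scal; apply: rsum_le => i.
have := CS (fun j => A i j) v. rewrite /dot /mv. move=> h; rewrite Rmult_comm; exact: h.
Qed.

Definition Bm n t (Hx : mat n) := madd (idm n) (mscale t Hx).

Lemma mv_B n t (Hx : mat n) w i : mv (Bm t Hx) w i = w i + t * mv Hx w i.
Proof.
rewrite /mv /Bm /madd /mscale (@rsum_ext _ _ (fun j => idm n i j * w j + t * (Hx i j * w j))).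
  by rewrite rsum_add rsum_scal -/(mv (idm n) w i) mv_idm.
by move=> j; ring.
Qed.

Lemma B_lower n t L (Hx : mat n) w : opnorm_le Hx L -> 0 <= t -> 8 * L * t <= 1 ->
  7/8 * vnorm w <= vnorm (mv (Bm t Hx) w).
Proof.
move=> hH ht hL.
have e : vnorm w = vnorm (fun i => mv (Bm t Hx) w i - t * mv Hx w i).
  by apply: vnorm_ext => i; rewrite mv_B; ring.
have := vnorm_sub (mv (Bm t Hx) w) (fun i => t * mv Hx w i).
rewrite -e vnorm_scale Rabs_pos_eq //.
have := hH w; have := vnorm_ge0 w; have := vnorm_ge0 (mv Hx w); nra.
Qed.

Lemma B_upper n t L (Hx : mat n) w : opnorm_le Hx L -> 0 <= t -> 8 * L * t <= 1 ->
  vnorm (mv (Bm t Hx) w) <= 9/8 * vnorm w.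
Proof.
move=> hH ht hL.
rewrite (@vnorm_ext _ _ (fun i => w i + t * mv Hx w i)); last by move=> i; rewrite mv_B.
apply: Rle_trans (vnorm_add _ _) _; rewrite vnorm_scale Rabs_pos_eq //.
have := hH w; have := vnorm_ge0 w; have := vnorm_ge0 (mv Hx w); nra.
Qed.

Lemma A_bound n t L (Hx : mat n) w : opnorm_le Hx L -> 0 <= t -> 8 * L * t <= 1 ->
  vnorm (mv (mm (Bm t Hx) (Bm t Hx)) w) <= 81/64 * vnorm w.
Proof.
move=> hH ht hL; rewrite mv_mm.
have := B_upper w hH ht hL; have := B_upper (mv (Bm t Hx) w) hH ht hL; lra.
Qed.

Lemma G_bound n t L (Hx G : mat n) v : opnorm_le Hx L -> 0 <= t -> 8 * L * t <= 1 ->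
  mm (mm (Bm t Hx) (Bm t Hx)) G = idm n -> vnorm (mv G v) <= 64/49 * vnorm v.
Proof.
move=> hH ht hL hA.
have e : v = mv (Bm t Hx) (mv (Bm t Hx) (mv G v)) by rewrite -!mv_mm hA mv_idm.
have := B_lower (mv (Bm t Hx) (mv G v)) hH ht hL; have := B_lower (mv G v) hH ht hL.
rewrite -e; lra.
Qed.

Lemma quad_bounds n t L (Hx G S : mat n) v : opnorm_le Hx L -> 0 <= t -> 8 * L * t <= 1 ->
  is_inverse (mm (Bm t Hx) (Bm t Hx)) G -> is_pd_sqrt S G ->
  3 / 4 * (vnorm v * vnorm v) <= quad G v <= 4 / 3 * (vnorm v * vnorm v).
Proof.
move=> hH ht hL [hAG hGA] [hSS [hSsym _]].
set A := mm (Bm t Hx) (Bm t Hx).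
have hSA : mm S A = mm A S.
  have -> : mm S A = mm (mm A G) (mm S A) by rewrite hAG mm_idm_l.
  have hGS : mm G S = mm S G by rewrite -hSS mm_assoc.
  by rewrite mm_assoc -(mm_assoc G S A) hGS mm_assoc hGA mm_idm_r.
have hSAS : mm (mm S A) S = idm n by rewrite hSA mm_assoc hSS.
split.
- set u := mv S v.
  have e1 : quad G v = dot u u.
    by rewrite /quad -hSS mv_mm dot_sym_mv.
  have e2 : v = mv S (mv A u) by rewrite /u -!mv_mm hSAS mv_idm.
  have e3 : vnorm v * vnorm v = dot (mv A u) u.
    by rewrite vnorm_sq {1}e2 -dot_sym_mv // dot_comm /u.
  rewrite e1 e3 -vnorm_sq.
  have := dot_abs (mv A u) u; have := Rle_abs (dot (mv A u) u).
  have := A_bound u hH ht hL; have := vnorm_ge0 u; have := vnorm_ge0 (mv A u); rewrite -/A; nra.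
- rewrite /quad; have := dot_abs v (mv G v); have := Rle_abs (dot v (mv G v)).
  have := G_bound v hH ht hL hAG; have := vnorm_ge0 v; have := vnorm_ge0 (mv G v); nra.
Qed.

Lemma gamma0 n (x : vec n) k : vadd x (vscale 0 (basis k)) = x.
Proof. apply: functional_extensionality => i; rewrite /vadd /vscale; ring. Qed.

Lemma vnorm_hk n s (k : 'I_n) : vnorm (vscale s (basis k)) = Rabs s.
Proof. by rewrite /vscale vnorm_scale vnorm_basis Rmult_1_r. Qed.

Lemma rsum_hk n s (k : 'I_n) (F : 'I_n -> R) : rsum (fun i => vscale s (basis k) i * F i) = s * F k.
Proof.
rewrite (@rsum_ext _ _ (fun i => if i == k then s * F i else 0)) ?rsum_delta //.
by move=> i; rewrite /vscale /basis; case: (i == k); ring.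
Qed.

Lemma entry_le_mnorm n (A : mat n) j l : Rabs (A j l) <= mnorm A.
Proof.
rewrite -(sqrt_Rsqr_abs (A j l)) /mnorm; apply: sqrt_le_1_alt.
apply: Rle_trans (rsum_term (fun i => rsum (fun j => A i j * A i j)) j _).
- exact: (rsum_term (fun q => A j q * A j q) l (fun q => Rle_0_sqr (A j q))).
- by move=> i; apply: rsum_ge0 => q; exact: Rle_0_sqr.
Qed.

Lemma H_partial n (H : vec n -> mat n) T x k j m : has_mderiv H T ->
  derivable_pt_lim (fun s => H (vadd x (vscale s (basis k))) j m) 0 (T x k j m).
Proof.
move=> hD eps heps.
have [d [hd hh]] := hD x (eps / 2) ltac:(lra).
exists (mkposreal d hd) => h hne /= hlt.
rewrite Rplus_0_l gamma0.
have := hh (vscale h (basis k)); rewrite vnorm_hk => /(_ hlt) hm.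
have := entry_le_mnorm (fun j0 k0 => H (vadd x (vscale h (basis k))) j0 k0 - H x j0 k0 -
          rsum (fun i => vscale h (basis k) i * T x i j0 k0)) j m.
rewrite /= rsum_hk => he.
have ha : 0 < Rabs h by apply: Rabs_pos_lt.
have -> : (H (vadd x (vscale h (basis k))) j m - H x j m) / h - T x k j m =
          (H (vadd x (vscale h (basis k))) j m - H x j m - h * T x k j m) / h by field.
rewrite /Rdiv Rabs_mult Rabs_inv.
apply: (Rmult_lt_reg_r (Rabs h)) => //.
rewrite Rmult_assoc Rinv_l; last by lra.
nra.
Qed.

Lemma T_bound n (H : vec n -> mat n) T M : has_mderiv H T ->
  (forall x y, opnorm_le (msub (H x) (H y)) (M * vnorm (vsub x y))) ->
  forall x k, opnorm_le (T x k) M.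
Proof.
move=> hD hL x k v.
apply: Rle_plus_epsilon => eps heps.
have hv := vnorm_ge0 v.
set e := eps / (vnorm v + 1).
have he : 0 < e by apply: Rdiv_lt_0_compat; lra.
have [d [hd hh]] := hD x e he.
set s := d / 2.
have hs : 0 < s by rewrite /s; lra.
set h := vscale s (basis k).
have hnh : vnorm h = s by rewrite /h vnorm_hk Rabs_pos_eq; lra.
have := hh h; rewrite hnh => /(_ ltac:(rewrite /s; lra)) hm.
set Phi := (fun j0 k0 => H (vadd x h) j0 k0 - H x j0 k0 - rsum (fun i => h i * T x i j0 k0)) in hm.
have hxy : vnorm (vsub (vadd x h) x) = s.
  by rewrite -hnh; apply: vnorm_ext => i; rewrite /vsub /vadd; ring.
have hD1 := hL (vadd x h) x v; rewrite hxy in hD1.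
have hP := mv_frob Phi v.
have e1 : vnorm (mv (T x k) v) * s =
          vnorm (fun i => mv (msub (H (vadd x h)) (H x)) v i - mv Phi v i).
  rewrite Rmult_comm -(Rabs_pos_eq s); last lra.
  rewrite -vnorm_scale; apply: vnorm_ext => i.
  rewrite /mv -rsum_sub -rsum_scal; apply: rsum_ext => j.
  rewrite /Phi /h rsum_hk /msub; ring.
have := vnorm_sub (mv (msub (H (vadd x h)) (H x)) v) (mv Phi v); rewrite -e1 => h2.
have h3 : vnorm (mv (T x k) v) * s <= (M * vnorm v + e * vnorm v) * s.
  have := Rmult_le_compat_r (vnorm v) _ _ hv hm. nra.
have h4 : vnorm (mv (T x k) v) <= M * vnorm v + e * vnorm v.
  by apply: (Rmult_le_reg_r s) => //.
have h5 : e * vnorm v <= eps.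
  rewrite /e /Rdiv; have : 0 < / (vnorm v + 1) by apply: Rinv_0_lt_compat; lra.
  have : / (vnorm v + 1) * (vnorm v + 1) = 1 by apply: Rinv_l; lra.
  nra.
lra.
Qed.

Lemma dplus (f g : R -> R) x a b : derivable_pt_lim f x a -> derivable_pt_lim g x b ->
  derivable_pt_lim (fun s => f s + g s) x (a + b).
Proof. exact: derivable_pt_lim_plus. Qed.

Lemma dmult (f g : R -> R) x a b : derivable_pt_lim f x a -> derivable_pt_lim g x b ->
  derivable_pt_lim (fun s => f s * g s) x (a * g x + f x * b).
Proof. exact: derivable_pt_lim_mult. Qed.

Lemma dconst c x : derivable_pt_lim (fun _ => c) x 0.
Proof. exact: derivable_pt_lim_const. Qed.

Lemma dval f x a b : derivable_pt_lim f x a -> a = b -> derivable_pt_lim f x b.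
Proof. by move=> h <-. Qed.

Lemma dfun f g x a : derivable_pt_lim f x a -> (forall s, f s = g s) -> derivable_pt_lim g x a.
Proof. by move=> h e; have <- : f = g by apply: functional_extensionality. Qed.

Lemma deriv_rsum n (F : 'I_n -> R -> R) dF x0 :
  (forall i, derivable_pt_lim (F i) x0 (dF i)) ->
  derivable_pt_lim (fun s => rsum (fun i => F i s)) x0 (rsum dF).
Proof.
move=> h; rewrite /rsum.
elim: (index_enum _) => [|a r IH].
- apply: (dfun (f := fun _ => 0)); rewrite ?big_nil; first exact: dconst.
  by move=> s; rewrite big_nil.
- rewrite big_cons; apply: (dfun (f := fun s => F a s + \big[Rplus/0]_(i <- r) F i s)).
    exact: dplus.
  by move=> s; rewrite big_cons.
Qed.

Lemma DG_eq n (H : vec n -> mat n) T (G : vec n -> mat n) DG t x k :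
  has_mderiv H T ->
  (forall y, is_inverse (mm (Bm t (H y)) (Bm t (H y))) (G y)) ->
  (forall i j, has_partial (fun y => G y i j) x k (DG x i j k)) ->
  (fun i j => DG x i j k) =
  mm (fun i m => - mm (G x) (fun j m => rsum (fun l => t * T x k j l * Bm t (H x) l m
                         + Bm t (H x) j l * (t * T x k l m))) i m) (G x).
Proof.
move=> hD hG hP.
set B0 := Bm t (H x).
set dA := (fun j m => rsum (fun l => t * T x k j l * B0 l m + B0 j l * (t * T x k l m))).
set g := fun s => vadd x (vscale s (basis k)).
have g0 : g 0 = x by rewrite /g gamma0.
have hB : forall j l, derivable_pt_lim (fun s => Bm t (H (g s)) j l) 0 (t * T x k j l).
  move=> j l.
  apply: (dfun (f := fun s => idm n j l + (fun _ => t) s * H (g s) j l)); last by [].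
  apply: dval; first exact: (dplus (dconst _ _) (dmult (dconst t 0) (H_partial x k j l hD))).
  rewrite /=; ring.
have hA : forall j m, derivable_pt_lim (fun s => mm (Bm t (H (g s))) (Bm t (H (g s))) j m) 0 (dA j m).
  move=> j m; rewrite /mm.
  apply: dval; first by apply: deriv_rsum => l; exact: (dmult (hB j l) (hB l m)).
  by rewrite /dA g0.
have hGA : forall i m, rsum (fun j => DG x i j k * mm B0 B0 j m + G x i j * dA j m) = 0.
  move=> i m.
  have h1 : derivable_pt_lim (fun s => mm (G (g s)) (mm (Bm t (H (g s))) (Bm t (H (g s)))) i m) 0
             (rsum (fun j => DG x i j k * mm B0 B0 j m + G x i j * dA j m)).
    rewrite {1}/mm; apply: dval.
      apply: deriv_rsum => j; apply: (dmult (hP i j) (hA j m)).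
    by apply: rsum_ext => j /=; rewrite g0 gamma0.
  have h2 : derivable_pt_lim (fun s => mm (G (g s)) (mm (Bm t (H (g s))) (Bm t (H (g s)))) i m) 0 0.
    apply: (dfun (f := fun _ => idm n i m)); first exact: dconst.
    by move=> s; case: (hG (g s)) => _ ->.
  exact: (uniqueness_limite _ _ _ _ h1 h2).
have hDA : mm (fun i j => DG x i j k) (mm B0 B0) = (fun i m => - mm (G x) dA i m).
  apply: functional_extensionality => i; apply: functional_extensionality => m.
  have := hGA i m; rewrite rsum_add /mm; lra.
case: (hG x) => hAG _.
rewrite -hDA mm_assoc -/B0 hAG mm_idm_r //.
Qed.

Lemma DG_entry n (H : vec n -> mat n) T (G : vec n -> mat n) DG t L M x i j :
  has_mderiv H T -> (forall x k, opnorm_le (T x k) M) -> 0 <= M ->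
  (forall y, opnorm_le (H y) L) -> 0 <= t -> 8 * L * t <= 1 ->
  (forall y, is_inverse (mm (Bm t (H y)) (Bm t (H y))) (G y)) ->
  (forall i j k, has_partial (fun y => G y i j) x k (DG x i j k)) ->
  Rabs (DG x i j j) <= 2 * t * M * (9/8) * (64/49) * (64/49).
Proof.
move=> hD hT hM hH ht hL hG hP.
set c := 2 * t * M * (9/8) * (64/49) * (64/49).
have hc : 0 <= c by rewrite /c; nra.
set B0 := Bm t (H x).
set dA := (fun a m => rsum (fun l => t * T x j a l * B0 l m + B0 a l * (t * T x j l m))).
have hAG : mm (mm B0 B0) (G x) = idm n by case: (hG x).
have e := DG_eq G DG hD hG (fun i0 j0 => hP i0 j0 j).
have -> : DG x i j j = mv (fun a b => DG x a b j) (basis j) i by rewrite mv_basis.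
apply: Rle_trans (comp_le _ i) _.
rewrite e -/B0 -/dA mv_mm.
set w := mv (G x) (basis j).
have hw : vnorm w <= 64/49 by have := G_bound (basis j) (hH x) ht hL hAG; rewrite vnorm_basis /w; lra.
have e2 : mv (fun i0 m => - mm (G x) dA i0 m) w = (fun i0 => (-1) * mv (G x) (mv dA w) i0).
  apply: functional_extensionality => i0; rewrite -mv_mm /mv -rsum_scal.
  by apply: rsum_ext => q; ring.
rewrite e2 vnorm_scale Rabs_Ropp Rabs_R1 Rmult_1_l.
have e3' : forall u, mv dA u = (fun i0 => t * mv (T x j) (mv B0 u) i0 + t * mv B0 (mv (T x j) u) i0).
  move=> u; apply: functional_extensionality => i0; rewrite -!mv_mm /mv -!rsum_scal -rsum_add.
  apply: rsum_ext => q.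
  have -> : dA i0 q = t * mm (T x j) B0 i0 q + t * mm B0 (T x j) i0 q.
    by rewrite /dA /mm -!rsum_scal -rsum_add; apply: rsum_ext => l; ring.
  ring.
have e3 := e3' w.
have h1 : vnorm (mv dA w) <= 2 * t * M * (9/8) * vnorm w.
  rewrite e3; apply: Rle_trans (vnorm_add _ _) _.
  rewrite !vnorm_scale Rabs_pos_eq //.
  have ha : vnorm (mv (T x j) (mv B0 w)) <= 9/8 * M * vnorm w.
    have := hT x j (mv B0 w); have := B_upper w (hH x) ht hL; rewrite -/B0.
    have := vnorm_ge0 w; have := vnorm_ge0 (mv B0 w); nra.
  have hb : vnorm (mv B0 (mv (T x j) w)) <= 9/8 * M * vnorm w.
    have := hT x j w; have := B_upper (mv (T x j) w) (hH x) ht hL; rewrite -/B0.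
    have := vnorm_ge0 w; have := vnorm_ge0 (mv (T x j) w); nra.
  have := Rmult_le_compat_l t _ _ ht ha; have := Rmult_le_compat_l t _ _ ht hb; lra.
have h2 := G_bound (mv dA w) (hH x) ht hL hAG.
have htM : 0 <= 2 * t * M * (9/8) by nra.
have h3 := Rmult_le_compat_l _ _ _ htM hw.
rewrite /c; lra.
Qed.

Lemma S_bound n t L (Hx G S : mat n) w : opnorm_le Hx L -> 0 <= t -> 8 * L * t <= 1 ->
  is_inverse (mm (Bm t Hx) (Bm t Hx)) G -> is_pd_sqrt S G ->
  vnorm (mv S w) <= 8/7 * vnorm w.
Proof.
move=> hH ht hL [hAG _] [hSS [hSsym _]].
have hw := vnorm_ge0 w.
apply: vnorm_le; first lra.
rewrite -dot_sym_mv // -mv_mm hSS.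
have := dot_abs w (mv G w); have := Rle_abs (dot w (mv G w)).
have := G_bound w hH ht hL hAG; have := vnorm_ge0 (mv G w); nra.
Qed.

Lemma vnorm_zero (v : vec 0) : vnorm v = 0.
Proof. by rewrite /vnorm /dot /rsum big_ord0 sqrt_0. Qed.

Unset Implicit Arguments.

Theorem lemma5 (n : nat) (f : vec n -> R) (g : vec n -> vec n) (H : vec n -> mat n)
  (T : vec n -> 'I_n -> mat n) (L M t : R)
  (Hsmooth : LM_smooth f g H T L M)
  (ht0 : 0 <= t) (htL : 8 * L * t <= 1) (htM : M * t <= 1)
  (G : vec n -> mat n)
  (HG : forall x, is_inverse (mm (madd (idm n) (mscale t (H x)))
                                 (madd (idm n) (mscale t (H x)))) (G x))
  (S : vec n -> mat n) (HS : forall x, is_pd_sqrt (S x) (G x))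
  (DG : vec n -> 'I_n -> 'I_n -> 'I_n -> R)
  (HDG : forall x i j k, has_partial (fun y => G y i j) x k (DG x i j k)) :
  forall x : vec n,
    (forall v : vec n, 3 / 4 * (vnorm v * vnorm v) <= quad (G x) v
                       <= 4 / 3 * (vnorm v * vnorm v)) /\
    vnorm (mu_tilde t (g x) (H x) (T x) (G x) (S x) (DG x))
      <= 4 / 3 * t * L * vnorm (g x) + 6 * t * (INR n * sqrt (INR n)) * M.
Proof.
move=> x.
case: Hsmooth => _ [_ [hD [hHop hLip]]].
have hT := T_bound hD hLip.
split.
  by move=> v; exact: (quad_bounds v (hHop x) ht0 htL (HG x) (HS x)).
have [hn0|hnpos] : n = 0%N \/ (0 < n)%N by case: n {f g H T G S DG HG HS HDG hD hHop hLip hT x}; [left|right].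
  subst n; rewrite !vnorm_zero /=; rewrite sqrt_0; lra.
set i0 := Ordinal hnpos.
have hM : 0 <= M.
  have := hT x i0 (basis i0); rewrite vnorm_basis; have := vnorm_ge0 (mv (T x i0) (basis i0)); lra.
have hL : 0 <= L.
  have := hHop x (basis i0); rewrite vnorm_basis; have := vnorm_ge0 (mv (H x) (basis i0)); lra.
have hAG : mm (mm (Bm t (H x)) (Bm t (H x))) (G x) = idm n by case: (HG x).
set N := INR n * sqrt (INR n).
have hN : 0 <= N by apply: Rmult_le_pos; [exact: pos_INR | exact: sqrt_pos].
have ha : vnorm (vscale (- t) (mv (mm (H x) (G x)) (g x))) <= 64/49 * (t * L * vnorm (g x)).
  rewrite /vscale vnorm_scale Rabs_Ropp Rabs_pos_eq // mv_mm.
  have := hHop x (mv (G x) (g x)); have := G_bound (g x) (hHop x) ht0 htL hAG.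
  have := vnorm_ge0 (g x); have := vnorm_ge0 (mv (G x) (g x)).
  have := vnorm_ge0 (mv (H x) (mv (G x) (g x))).
  move=> h1 h2 h3 h4 h5.
  have h6 : vnorm (mv (H x) (mv (G x) (g x))) <= L * (64/49 * vnorm (g x)).
    apply: Rle_trans h5 _; apply: Rmult_le_compat_l => //.
  have := Rmult_le_compat_l t _ _ ht0 h6; lra.
have htr : forall i, Rabs (tr3 (T x) (G x) i) <= INR n * (M * (64/49)).
  move=> i; rewrite /tr3 /mtrace; apply: rsum_bound => j.
  have -> : mm (T x i) (G x) j j = mv (T x i) (mv (G x) (basis j)) j by rewrite -mv_mm mv_basis.
  apply: Rle_trans (comp_le _ j) _.
  apply: Rle_trans (hT x i _) _.
  have := G_bound (basis j) (hHop x) ht0 htL hAG; rewrite vnorm_basis => h.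
  apply: Rmult_le_compat_l => //; lra.
have hb : vnorm (vscale t (mv (S x) (tr3 (T x) (G x)))) <= 8/7 * (64/49) * (N * t * M).
  rewrite /vscale vnorm_scale Rabs_pos_eq //.
  have h1 := S_bound (tr3 (T x) (G x)) (hHop x) ht0 htL (HG x) (HS x).
  have h2 : vnorm (tr3 (T x) (G x)) <= sqrt (INR n) * (INR n * (M * (64/49))).
    apply: vnorm_comp_bound => //; apply: Rmult_le_pos; [exact: pos_INR| lra].
  have h3 : vnorm (mv (S x) (tr3 (T x) (G x))) <= 8/7 * (64/49) * (N * M).
    rewrite /N; nra.
  have := Rmult_le_compat_l t _ _ ht0 h3; nra.
have hc : vnorm (mdiv (DG x)) <= 2 * (9/8) * (64/49) * (64/49) * (N * t * M).
  have hc0 : 0 <= INR n * (2 * t * M * (9/8) * (64/49) * (64/49)).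
    have e : 2 * t * M * (9/8) * (64/49) * (64/49) = (t * M) * (2 * (9/8) * (64/49) * (64/49)) by ring.
    rewrite e; apply: Rmult_le_pos; first exact: pos_INR.
    apply: Rmult_le_pos; [exact: Rmult_le_pos | lra].
  have h1 : forall i, Rabs (mdiv (DG x) i) <= INR n * (2 * t * M * (9/8) * (64/49) * (64/49)).
    move=> i; rewrite /mdiv; apply: rsum_bound => j.
    exact: (DG_entry G DG i j hD hT hM hHop ht0 htL HG (HDG x)).
  have h2 := vnorm_comp_bound (mdiv (DG x)) hc0 h1.
  have e : sqrt (INR n) * (INR n * (2 * t * M * (9/8) * (64/49) * (64/49))) =
           2 * (9/8) * (64/49) * (64/49) * (N * t * M) by rewrite /N; ring.
  lra.
rewrite /mu_tilde.
have e1 := vnorm_sub (vsub (vscale (- t) (mv (mm (H x) (G x)) (g x))) (vscale t (mv (S x) (tr3 (T x) (G x))))) (mdiv (DG x)).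
have e2 := vnorm_sub (vscale (- t) (mv (mm (H x) (G x)) (g x))) (vscale t (mv (S x) (tr3 (T x) (G x)))).
rewrite /vsub in e1 e2 *.
have hP : 0 <= N * t * M by apply: Rmult_le_pos => //; apply: Rmult_le_pos.
have hQ : 0 <= t * L * vnorm (g x) by apply: Rmult_le_pos; [nra| exact: vnorm_ge0].
have -> : 6 * t * N * M = 6 * (N * t * M) by ring.
lra.
Qed.
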